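(* Let $n\ge m\ge 0$ be integers with $n-m\equiv 1 \pmod 2$. Then $$\int_{-\infty}^{\infty} f_n(x) f_m(x)\,dx = \frac{1}{2}\binom{n+m+1}{\frac{n+m+1}{2}}.$$
   Context: For $A\subseteq\mathbb{R}$, $\chi_A$ denotes the characteristic function of $A$. Define functions $f_n:\mathbb{R}\to\mathbb{R}$, $n = 0,1,2,\dots$, recursively by $f_0 = \chi_{(-1/2,1/2)}$ and $f_{n+1}(x) = f_n(x+1/2) + f_n(x-1/2)$ for all $x\in\mathbb{R}$. *)

(* Defs.v *)
From HB Require Import structures.
From mathcomp Require Import all_boot all_order all_algebra.
From mathcomp Require Import all_classical all_reals all_analysis.
Set Implicit Arguments. Unset Strict Implicit. Unset Printing Implicit Defensive.
Import Order.TTheory GRing.Theory Num.Theory.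
Local Open Scope classical_set_scope.
Local Open Scope ring_scope.

Fixpoint f (R : realType) (n : nat) (x : R) : R :=
  match n with
  | 0%N => \1_(`] (- 2^-1), 2^-1 [) x
  | k.+1 => f k (x + 2^-1) + f k (x - 2^-1)
  end.

(* Main.v *)
Require Import Defs.
From HB Require Import structures.
From mathcomp Require Import all_boot all_order all_algebra.
From mathcomp Require Import all_classical all_reals all_analysis.
From mathcomp Require Import measurable_realfun.
From mathcomp Require Import ring lra zify.
Import Order.TTheory GRing.Theory Num.Theory.
Local Open Scope classical_set_scope.
Local Open Scope ring_scope.
Set Implicit Arguments. Unset Strict Implicit. Unset Printing Implicit Defensive.

Definition gI (R : realType) (c : R) : set R := `](c - 2^-1), (c + 2^-1)[.
Definition g (R : realType) (c x : R) : R := \1_(gI c) x.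

Lemma in_gI (R : realType) (c x : R) : (x \in gI c) = (c - 2^-1 < x < c + 2^-1).
Proof. by rewrite /gI mem_setE in_itv. Qed.

Lemma g_shift (R : realType) (c x y : R) : g c (x + y) = g (c - y) x.
Proof.
rewrite /g !indicE !in_gI; congr ((_ : bool)%:R).
apply/idP/idP => /andP[H1 H2]; apply/andP; split; lra.
Qed.

Definition cen (R : realType) (n k : nat) : R := k%:R - n%:R * 2^-1.

Lemma f_sum (R : realType) n (x : R) :
  f n x = \sum_(k < n.+1) 'C(n, k)%:R * g (cen R n k) x.
Proof.
elim: n x => [|n IH] x.
  rewrite big_ord1 /= bin0 mul1r /g /cen /gI !mul0r !subr0 sub0r add0r.
  by [].
rewrite /= !IH.
have E1 : forall k : nat, g (cen R n k) (x + 2^-1) = g (cen R n.+1 k) x.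
  move=> k; rewrite g_shift /cen; congr (g _ x).
  rewrite -[n.+1]addn1 natrD; lra.
have E2 : forall k : nat, g (cen R n k) (x - 2^-1) = g (cen R n.+1 k.+1) x.
  move=> k; rewrite g_shift /cen; congr (g _ x).
  rewrite -[n.+1]addn1 -[k.+1]addn1 !natrD; lra.
rewrite (eq_bigr (fun k : 'I_n.+1 => 'C(n, k)%:R * g (cen R n.+1 k) x)); last first.
  by move=> k _; rewrite E1.
rewrite [X in _ + X = _](eq_bigr (fun k : 'I_n.+1 => 'C(n, k)%:R * g (cen R n.+1 k.+1) x)); last first.
  by move=> k _; rewrite E2.
rewrite [RHS]big_ord_recl [X in X + _ = _]big_ord_recl !bin0 addrAC.
rewrite -addrA; congr (_ + _).
rewrite [RHS](eq_bigr (fun i : 'I_n.+1 => 'C(n, i.+1)%:R * g (cen R n.+1 i.+1) x + 'C(n,i)%:R * g (cen R n.+1 i.+1) x)); last first.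
  by move=> i _; rewrite lift0 binS natrD mulrDl.
rewrite big_split /= [X in _ = X + _]big_ord_recr /= bin_small // mul0r addr0 addrC.
by congr (_ + _); apply: eq_bigr => i _; rewrite lift0.
Qed.

Definition Tf (R : realType) (t : R) : R := if `|t| < 1 then 1 - `|t| else 0.

Lemma meas_int (R : realType) (a b : R) :
  lebesgue_measure (gI a `&` gI b) = (Tf (a - b))%:E.
Proof.
wlog H : a b / a <= b.
  move=> W; case: (leP a b) => H; first exact: W.
  rewrite setIC W; last exact: ltW.
  by rewrite /Tf distrC.
have -> : gI a `&` gI b = [set` `](b - 2^-1), (a + 2^-1)[].
  apply/seteqP; split => y /=.
    move=> [/mem_set Ha /mem_set Hb]; rewrite in_gI in Ha; rewrite in_gI in Hb.
    rewrite in_itv /=; move/andP: Ha => [? ?]; move/andP: Hb => [? ?].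
    apply/andP; split; lra.
  rewrite in_itv /= => /andP[H1 H2]; split; apply/set_mem; rewrite in_gI; apply/andP; split; lra.
rewrite lebesgue_measure_itv /= lte_fin /Tf distrC ger0_norm; last by rewrite subr_ge0.
case: ifP => H1; case: ifP => H2.
- by rewrite -EFinB; congr (_%:E); lra.
- exfalso; move/negbT: H2; rewrite -leNgt => H2; lra.
- exfalso; move/negbT: H1; rewrite -leNgt => H1; lra.
- by [].
Qed.

Lemma Tf_val (R : realType) (m d k j : nat) :
  Tf (cen R (m + d.*2).+1 k - cen R m j) =
  2^-1 * ((k == j + d :> nat) + (k == j + d.+1 :> nat))%:R.
Proof.
have -> : cen R (m + d.*2).+1 k - cen R m j = k%:R - (j + d)%:R - 2^-1.
  rewrite /cen -addn1 !natrD -muln2 natrM; lra.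
rewrite /Tf.
have [H|H|H] := ltngtP k (j + d).
- have E1 : (k == j + d) = false by apply/negbTE/eqP; lia.
  have E2 : (k == j + d.+1) = false by apply/negbTE/eqP; lia.
  rewrite ?E1 ?E2 mulr0.
  have H' : k%:R + 1 <= (j + d)%:R :> R by rewrite natr1 ler_nat.
  have -> : (`|k%:R - (j + d)%:R - 2^-1 : R| < 1) = false.
    apply/negbTE; rewrite ltr_norml negb_and -!leNgt; apply/orP; left; lra.
  by [].
- have E1 : (k == j + d) = false by apply/negbTE/eqP; lia.
  rewrite ?E1 add0n.
  case: (ltngtP k (j + d.+1)) => H2.
  + exfalso; lia.
  + have H' : (j + d)%:R + 2 <= k%:R :> R.
      have : (j + d + 2 <= k)%N by lia.
      by rewrite -(ler_nat R) natrD.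
    have -> : (`|k%:R - (j + d)%:R - 2^-1 : R| < 1) = false.
      apply/negbTE; rewrite ltr_norml negb_and -!leNgt; apply/orP; right; lra.
    by rewrite mulr0.
  + subst k; rewrite ?eqxx mulr1.
    have -> : (j + d.+1)%:R - (j + d)%:R - 2^-1 = 2^-1 :> R.
      by rewrite addnS -addn1 natrD; lra.
    rewrite ger0_norm; last lra.
    have -> : (2^-1 < 1 :> R) = true by apply/idP; lra.
    lra.
- subst k; rewrite ?eqxx ?addnS.

  have -> : (j + d == j + d.+1) = false by apply/negbTE/eqP; lia.
  rewrite addn0 mulr1.
  have -> : (j + d)%:R - (j + d)%:R - 2^-1 = - 2^-1 :> R by lra.
  rewrite normrN ger0_norm; last lra.
  have -> : (2^-1 < 1 :> R) = true by apply/idP; lra.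
  lra.
Qed.
Section Comb.
Local Open Scope nat_scope.
Lemma sum_pick (F : nat -> nat) N c :
  \sum_(k < N) F k * (k == c :> nat) = (c < N) * F c.
Proof.
elim: N => [|N IH]; first by rewrite big_ord0.
rewrite big_ord_recr /= IH.

case: (ltngtP c N) => H.
- have -> : c < N.+1 by lia.
  by rewrite !mul1n muln0 addn0.
- have -> : c < N.+1 = false by apply/negbTE; lia.
  by rewrite muln0.
- subst c. by rewrite ltnSn !mul1n muln1 add0n.
Qed.

Lemma sum_bin_pick n c : \sum_(k < n.+1) 'C(n, k) * (k == c :> nat) = 'C(n, c).
Proof.
rewrite (sum_pick (fun k => 'C(n, k))).
case: ltnP => H; first by rewrite mul1n.
by rewrite mul0n bin_small.
Qed.

Lemma vander2 m n c :
  \sum_(j < m.+1) 'C(m, j) * 'C(n, j + c) = 'C(m + n, m + c).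
Proof.
rewrite -binomial.Vandermonde.
pose G j := 'C(m, j) * 'C(n, m + c - j).
have E : \sum_(j < (m+c).+1) G j = \sum_(j < m.+1) G j.
  rewrite [RHS](big_ord_widen (m+c).+1 G); last by lia.
  rewrite [RHS]big_mkcond /=; apply: eq_bigr => j _; case: ifP => // /negbT H.
  rewrite /G bin_small ?mul0n //; lia.
rewrite E /G.
rewrite (reindex_inj rev_ord_inj) /=.
apply: eq_bigr => j _.
have Hj := ltn_ord j.
rewrite subSS bin_sub; last by lia.
congr (_ * 'C(n, _)); lia.
Qed.

Lemma comb_main m d :
  \sum_(k < (m + d.*2).+2) \sum_(j < m.+1)
     'C((m + d.*2).+1, k) * 'C(m, j) * ((k == j + d :> nat) + (k == j + d.+1 :> nat))
  = 'C((m + d.*2).+1 + m + 1, m + d + 1).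
Proof.
set n := (m + d.*2).+1.
rewrite exchange_big /=.
rewrite (eq_bigr (fun j : 'I_m.+1 => 'C(m, j) * ('C(n, j + d) + 'C(n, j + d.+1)))); last first.
  move=> j _.
  rewrite (eq_bigr (fun k : 'I_n.+1 => 'C(m, j) * ('C(n, k) * (k == j + d :> nat) + 'C(n, k) * (k == j + d.+1 :> nat)))); last first.
    by move=> k _; rewrite -mulnDr mulnA (mulnC 'C(m, j)).
  by rewrite -big_distrr /= big_split /= !sum_bin_pick.
rewrite (eq_bigr (fun j : 'I_m.+1 => 'C(m, j) * 'C(n, j + d) + 'C(m, j) * 'C(n, j + d.+1))); last by move=> j _; rewrite mulnDr.
rewrite big_split /= !vander2.
have -> : n + m + 1 = (m + n).+1 by lia.
have -> : m + d + 1 = (m + d).+1 by lia.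
by rewrite binS addnC addnS.
Qed.
End Comb.

Lemma int_cst_indic (R : realType) (k : R) (S : set R) : 0 <= k -> measurable S ->
  (\int[@lebesgue_measure R]_(x in [set: R]) (k * \1_S x)%:E = k%:E * lebesgue_measure S)%E.
Proof.
move=> k0 mS.
have := @integralZl_indic _ _ _ (@lebesgue_measure R) setT measurableT (fun=> S) k.
move=> /(_ _ mS) /=; rewrite integral_indic // setIT => -> //.
by move=> H; exfalso; move: H; rewrite ltNge k0.
Qed.

Theorem mainTheorem6 (R : realType) (n m : nat) :
  (m <= n)%N -> odd (n - m) ->
  (\int[@lebesgue_measure R]_(x in [set: R]) (f n x * f m x)%:E =
   (2^-1 * ('C(n + m + 1, (n + m + 1) %/ 2))%:R)%:E)%E.
Proof.
move=> Hmn Hodd.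
have [d En] : exists d, n = (m + d.*2).+1.
  exists ((n - m)./2); have := odd_double_half (n - m); rewrite Hodd /=; lia.
have Ediv : ((n + m + 1) %/ 2 = m + d + 1)%N by rewrite En; lia.
rewrite Ediv; clear Ediv.
have Hpt : forall x, (f n x * f m x)%:E =
   (\sum_(p : 'I_n.+1 * 'I_m.+1)
     (('C(n, p.1) * 'C(m, p.2))%:R * \1_(gI (cen R n p.1) `&` gI (cen R m p.2)) x)%:E)%E.
  move=> x; rewrite sumEFin; congr (_%:E).
subst n.
  rewrite !f_sum big_distrlr /= pair_big /=.
  apply: eq_bigr => p _.
  by rewrite indicI /g natrM mulrACA.
under eq_integral => x _ do rewrite Hpt.
rewrite ge0_integral_sum //.
2:{ move=> p; apply/measurable_EFinP.
  apply: measurable_funM => //; apply: measurable_indic.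
  by apply: measurableI; exact: measurable_itv. }
under eq_bigr => p _.
  rewrite int_cst_indic //; last by apply: measurableI; exact: measurable_itv.
  rewrite meas_int.
  over.
under eq_bigr => p _ do rewrite -EFinM.
rewrite sumEFin; congr (_%:E).
subst n.
rewrite -(pair_bigA _ (fun (i : 'I_(m + d.*2).+2) (j : 'I_m.+1) => ('C((m + d.*2).+1, i) * 'C(m, j))%:R * Tf (cen R (m + d.*2).+1 i - cen R m j))) /=.
rewrite -(comb_main m d) natr_sum mulr_sumr; apply: eq_bigr => i _.
rewrite natr_sum mulr_sumr; apply: eq_bigr => j _.
rewrite Tf_val !natrM; ring.
Qed.
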